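(* Let $K>0$, $\mu>0$, $h>0$, and $r=h/H\in(0,1)$. Consider the homogeneous controlled patch problem (context) and suppose that, for some $k>0$, $T(x,t)=e^{-Kk^2t}\phi(x)$ is a solution with $\phi\not\equiv 0$ odd of the form $$\phi(x)=\begin{cases}A\sin kx, & |x|<h/4,\\ \pm C+D\sin[k(x\mp\tfrac h2)]\pm E\cos[k(x\mp \tfrac h2)], & h/4\le \pm x\le 3h/4,\\ B\sin[k(x\mp h)], & 3h/4\le \pm x\le h,\end{cases}$$ with $\phi,\phi'$ continuous and $2h$-periodic. Then $$\sin\frac{kh}{2}\left[\frac{2}{kh}\sin\frac{kh}{2}+\Big(\frac{k^2h^2}{\mu}-1\Big)\cos\frac{kh}{2}\right]=0 .$$
   Context: Homogeneous controlled patch problem (governing perturbations about an equilibrium). A field $T(x,t)$, $2h$-periodic in $x$, satisfies $T_t=KT_{xx}+\frac{K\mu}{h^2}g(x,T)$, where $g$ is piecewise constant: on the right action region $h/4<x<3h/4$, $g=T_{\mathrm{int}}-\frac2h\int_{h/4}^{3h/4}T\,dx$; on the left action region $-3h/4<x<-h/4$, $g=T_{\mathrm{int}}-\frac2h\int_{-3h/4}^{-h/4}T\,dx$; and $g=0$ on the core $|x|<h/4$ and buffer $3h/4<|x|\le h$. Here $T_c=\frac2h\int_{-h/4}^{h/4}T\,dx$ is the core average and, with $r=h/H$, $$T_{\mathrm{int}}=T_c\,\frac{1-13r^2/48}{1-r^2/48}$$ (this is the action-region average of the parabolic interpolant through zero boundary values at $x=\pm H$ with core average $T_c$). Solutions are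 understood piecewise, with $T,T_x$ continuous across region boundaries. *)

(* Defs.v *)
From Stdlib Require Import Reals Lra.
Open Scope R_scope.

Definition integral_is (f : R -> R) (a b v : R) : Prop :=
  exists pr : Riemann_integrable f a b, RiemannInt pr = v.

Definition second_deriv_is (f : R -> R) (x v : R) : Prop :=
  exists f' : R -> R,
    (exists delta, 0 < delta /\
       forall y, Rabs (y - x) < delta -> derivable_pt_lim f y (f' y)) /\
    derivable_pt_lim f' x v.

Definition pde_at (K mu h : R) (T : R -> R -> R) (x t g : R) : Prop :=
  exists Tt Txx,
    derivable_pt_lim (fun s => T x s) t Tt /\
    second_deriv_is (fun y => T y t) x Txx /\
    Tt = K * Txx + K * mu / h ^ 2 * g.

(* T (2h-periodic in x) solves the homogeneous controlled patch problem,
   with r = h/H.  Ic, IL, IR are the integrals of T(.,t) over the core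
   and the left/right action regions. *)
Definition solves_patch (K mu h H : R) (T : R -> R -> R) : Prop :=
  (forall x t, T (x + 2 * h) t = T x t) /\
  forall t, exists Ic IL IR : R,
    integral_is (fun y => T y t) (- h / 4) (h / 4) Ic /\
    integral_is (fun y => T y t) (- (3 * h / 4)) (- h / 4) IL /\
    integral_is (fun y => T y t) (h / 4) (3 * h / 4) IR /\
    let r := h / H in
    let Tc := 2 / h * Ic in
    let Tint := Tc * ((1 - 13 * r ^ 2 / 48) / (1 - r ^ 2 / 48)) in
    (forall x, Rabs x < h / 4 -> pde_at K mu h T x t 0) /\
    (forall x, h / 4 < x < 3 * h / 4 -> pde_at K mu h T x t (Tint - 2 / h * IR)) /\
    (forall x, - (3 * h / 4) < x < - h / 4 -> pde_at K mu h T x t (Tint - 2 / h * IL)) /\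
    (forall x, 3 * h / 4 < Rabs x <= h -> pde_at K mu h T x t 0).

(* Main.v *)
Require Import Defs.
From Stdlib Require Import Reals.
From Stdlib Require Import Lra.
From Coquelicot Require Import Coquelicot.
Open Scope R_scope.

Lemma cont_eq (f g : R -> R) (x0 : R) :
  continuity_pt f x0 -> continuity_pt g x0 ->
  (forall e, 0 < e -> exists y, Rabs (y - x0) < e /\ f y = g y) -> f x0 = g x0.
Proof.
  intros Hf Hg Hy.
  destruct (Req_dec (f x0) (g x0)) as [E|N]; auto. exfalso.
  assert (Hd : 0 < Rabs (f x0 - g x0)) by (apply Rabs_pos_lt; lra).
  set (d := Rabs (f x0 - g x0)) in *.
  destruct (Hf (d/2)) as [a1 [Ha1 H1]]; [lra|].
  destruct (Hg (d/2)) as [a2 [Ha2 H2]]; [lra|].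
  destruct (Hy (Rmin a1 a2)) as [y [Hy1 Hy2]]; [apply Rmin_pos; auto|].
  destruct (Req_dec y x0) as [->|Ny]; [congruence|].
  assert (Hm1 := Rmin_l a1 a2). assert (Hm2 := Rmin_r a1 a2).
  specialize (H1 y). specialize (H2 y).
  simpl in H1, H2. unfold R_dist in *.
  assert (A1 : Rabs (f y - f x0) < d/2) by (apply H1; split; [split; [exact I|auto]|lra]).
  assert (A2 : Rabs (g y - g x0) < d/2) by (apply H2; split; [split; [exact I|auto]|lra]).
  unfold d in *. rewrite Hy2 in A1.
  revert A1 A2; unfold Rabs; repeat destruct Rcase_abs; lra.
Qed.

Lemma der_cont (f : R -> R) x l : derivable_pt_lim f x l -> continuity_pt f x.
Proof.
  intro H. apply continuity_pt_filterlim. apply (ex_derive_continuous (K:=R_AbsRing) (V:=R_NormedModule) f).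
  exists l. apply is_derive_Reals. exact H.
Qed.

Lemma der_eq (f g : R -> R) x a b l l' : a < x < b ->
  (forall z, a < z < b -> f z = g z) ->
  derivable_pt_lim f x l -> derivable_pt_lim g x l' -> l = l'.
Proof.
  intros Hx He Hf Hg. apply (uniqueness_limite g x); auto.
  eapply derivable_pt_lim_locally_ext; eauto.
Qed.

Lemma dsin (A k x0 x : R) : derivable_pt_lim (fun y => A * sin (k * (y - x0))) x (A * k * cos (k * (x - x0))).
Proof. apply is_derive_Reals. auto_derive; auto. unfold Rminus; ring. Qed.
Lemma dcos (A k x0 x : R) : derivable_pt_lim (fun y => A * cos (k * (y - x0))) x (- A * k * sin (k * (x - x0))).
Proof. apply is_derive_Reals. auto_derive; auto. unfold Rminus; ring. Qed.

Lemma RI (f df F : R -> R) a b I : a <= b ->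
  integral_is f a b I ->
  (forall x, a <= x <= b -> derivable_pt_lim F x (df x)) ->
  (forall x, a <= x <= b -> continuity_pt df x) ->
  (forall x, a < x < b -> df x = f x) -> I = F b - F a.
Proof.
  intros Hab [pr Hpr] HF Hdf He. rewrite <- Hpr, <- RInt_Reals.
  apply is_RInt_unique. apply is_RInt_ext with df.
  - rewrite Rmin_left, Rmax_right by lra. auto.
  - change (F b - F a) with (minus (F b) (F a)).
    apply (is_RInt_derive (V:=R_CompleteNormedModule) F df); rewrite Rmin_left, Rmax_right by lra; intros x Hx.
    + apply is_derive_Reals; auto.
    + apply continuity_pt_filterlim; auto.
Qed.


Ltac cont := match goal with |- continuity_pt ?f ?x => apply continuity_pt_filterlim; apply (ex_derive_continuous (K:=R_AbsRing) (V:=R_NormedModule) f x); auto_derive; auto end.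

Ltac tor := match goal with |- ?a = ?b => change (@eq R a b) end.

Lemma daction (C D E k x0 x : R) : derivable_pt_lim (fun y => C + D*sin(k*(y-x0)) + E*cos(k*(y-x0))) x (D*k*cos(k*(x-x0)) - E*k*sin(k*(x-x0))).
Proof. apply is_derive_Reals. auto_derive; auto. unfold Rminus; ring. Qed.

Theorem mainTheorem3 (K mu h H k A B C D E : R) (phi : R -> R) :
  0 < K -> 0 < mu -> 0 < h -> 0 < h / H < 1 -> 0 < k ->
  (forall x, phi (- x) = - phi x) ->
  (exists x, phi x <> 0) ->
  (forall x, Rabs x < h / 4 -> phi x = A * sin (k * x)) ->
  (forall x, h / 4 <= x <= 3 * h / 4 ->
     phi x = C + D * sin (k * (x - h / 2)) + E * cos (k * (x - h / 2))) ->
  (forall x, h / 4 <= - x <= 3 * h / 4 ->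
     phi x = - C + D * sin (k * (x + h / 2)) - E * cos (k * (x + h / 2))) ->
  (forall x, 3 * h / 4 <= x <= h -> phi x = B * sin (k * (x - h))) ->
  (forall x, 3 * h / 4 <= - x <= h -> phi x = B * sin (k * (x + h))) ->
  (exists phi' : R -> R,
     (forall x, derivable_pt_lim phi x (phi' x)) /\ continuity phi') ->
  (forall x, phi (x + 2 * h) = phi x) ->
  solves_patch K mu h H (fun x t => exp (- K * k ^ 2 * t) * phi x) ->
  sin (k * h / 2) *
    (2 / (k * h) * sin (k * h / 2) + (k ^ 2 * h ^ 2 / mu - 1) * cos (k * h / 2)) = 0.
Proof.
  intros HK Hmu Hh Hr Hk Hodd [x0 Hx0] Hcore Hright Hleft Hbr Hbl [phi' [Hd Hc]] Hper Hsol.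
  assert (Hcore' : forall x, Rabs x < h/4 -> phi x = A * sin (k * (x - 0))).
  { intros x Hx; rewrite Rminus_0_r; auto. }
  assert (Pcore : forall x, Rabs x < h/4 -> phi' x = A*k*cos(k*(x-0))).
  { intros x Hx. apply (der_eq phi (fun y => A*sin(k*(y-0))) x (-(h/4)) (h/4)); auto.
    - revert Hx; unfold Rabs; destruct Rcase_abs; lra.
    - intros z Hz; apply Hcore'; unfold Rabs; destruct Rcase_abs; lra.
    - apply dsin. }
  assert (Pright : forall x, h/4 < x < 3*h/4 -> phi' x = D*k*cos(k*(x-h/2)) - E*k*sin(k*(x-h/2))).
  { intros x Hx. apply (der_eq phi (fun y => C + D*sin(k*(y-h/2)) + E*cos(k*(y-h/2))) x (h/4) (3*h/4)); auto.
    - intros z Hz; apply Hright; lra.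
    - apply daction. }
  assert (Pbuf : forall x, 3*h/4 < x < h -> phi' x = B*k*cos(k*(x-h))).
  { intros x Hx. apply (der_eq phi (fun y => B*sin(k*(y-h))) x (3*h/4) h); auto.
    - intros z Hz; apply Hbr; lra.
    - apply dsin. }
  assert (Hpos : forall e, 0 < e -> 0 < Rmin e (h/4) /\ Rmin e (h/4) <= e /\ Rmin e (h/4) <= h/4).
  { intros e He; split; [apply Rmin_pos; lra| split; [apply Rmin_l|apply Rmin_r]]. }
  assert (V1 : A * sin (k*(h/4-0)) = C + D * sin (k * (h/4 - h / 2)) + E * cos (k * (h/4 - h / 2))).
  { transitivity (phi (h/4)); [|apply Hright; lra]. symmetry.
    apply (cont_eq phi (fun y => A*sin(k*(y-0))) (h/4)); [eapply der_cont; apply Hd| cont |].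
    intros e He. destruct (Hpos e He) as [m1 [m2 m3]].
    exists (h/4 - Rmin e (h/4) / 2). split.
    - unfold Rabs; destruct Rcase_abs; lra.
    - apply Hcore'. unfold Rabs; destruct Rcase_abs; lra. }
  assert (V3 : C + D * sin (k * (3*h/4 - h / 2)) + E * cos (k * (3*h/4 - h / 2)) = B * sin (k*(3*h/4-h))).
  { rewrite <- (Hright (3*h/4)) by lra. apply Hbr; lra. }
  assert (D1a : phi' (h/4) = A*k*cos(k*(h/4-0))).
  { apply (cont_eq phi' (fun y => A*k*cos(k*(y-0))) (h/4)); [apply Hc| cont |].
    intros e He. destruct (Hpos e He) as [m1 [m2 m3]].
    exists (h/4 - Rmin e (h/4) / 2). split.
    - unfold Rabs; destruct Rcase_abs; lra.
    - apply Pcore. unfold Rabs; destruct Rcase_abs; lra. }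
  assert (D1b : phi' (h/4) = D*k*cos(k*(h/4-h/2)) - E*k*sin(k*(h/4-h/2))).
  { apply (cont_eq phi' (fun y => D*k*cos(k*(y-h/2)) - E*k*sin(k*(y-h/2))) (h/4)); [apply Hc| cont |].
    intros e He. destruct (Hpos e He) as [m1 [m2 m3]].
    exists (h/4 + Rmin e (h/4) / 2). split.
    - unfold Rabs; destruct Rcase_abs; lra.
    - apply Pright. lra. }
  assert (D3a : phi' (3*h/4) = D*k*cos(k*(3*h/4-h/2)) - E*k*sin(k*(3*h/4-h/2))).
  { apply (cont_eq phi' (fun y => D*k*cos(k*(y-h/2)) - E*k*sin(k*(y-h/2))) (3*h/4)); [apply Hc| cont |].
    intros e He. destruct (Hpos e He) as [m1 [m2 m3]].
    exists (3*h/4 - Rmin e (h/4) / 2). split.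
    - unfold Rabs; destruct Rcase_abs; lra.
    - apply Pright. lra. }
  assert (D3b : phi' (3*h/4) = B*k*cos(k*(3*h/4-h))).
  { apply (cont_eq phi' (fun y => B*k*cos(k*(y-h))) (3*h/4)); [apply Hc| cont |].
    intros e He. destruct (Hpos e He) as [m1 [m2 m3]].
    exists (3*h/4 + Rmin e (h/4) / 2). split.
    - unfold Rabs; destruct Rcase_abs; lra.
    - apply Pbuf. lra. }
  set (a := k*h/4).
  assert (e1 : k*(h/4-0) = a) by (unfold a; field).
  assert (e2 : k*(h/4-h/2) = -a) by (unfold a; field).
  assert (e3 : k*(3*h/4-h/2) = a) by (unfold a; field).
  assert (e4 : k*(3*h/4-h) = -a) by (unfold a; field).
  rewrite e1, e2 in V1. rewrite e3, e4 in V3. rewrite e1 in D1a. rewrite e2 in D1b.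
  rewrite e3 in D3a. rewrite e4 in D3b.
  rewrite sin_neg, cos_neg in *.
  set (s := sin a) in *. set (c := cos a) in *.
  assert (Q2 : A*c = D*c + E*s).
  { apply Rmult_eq_reg_l with k; [|lra]. nra. }
  assert (Q4 : D*c - E*s = B*c).
  { apply Rmult_eq_reg_l with k; [|lra]. nra. }
  assert (Hexp : exp (-K*k^2*0) = 1) by (replace (-K*k^2*0) with 0 by ring; apply exp_0).
  destruct Hsol as [_ Hsol]. destruct (Hsol 0) as [Ic [IL [IR [HIc [HIL [HIR Hrest]]]]]].
  cbv zeta in Hrest. destruct Hrest as [_ [HR _]].
  assert (Ic0 : Ic = 0).
  { rewrite (RI (fun y => exp (- K * k ^ 2 * 0) * phi y) (fun y => A*sin(k*(y-0))) (fun y => -A/k*cos(k*(y-0))) (-h/4) (h/4) Ic); [|lra|exact HIc| | |].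
    - cbv beta. assert (ee : k*(-h/4-0) = -(k*(h/4-0))) by (unfold Rminus, Rdiv; ring). rewrite ee, cos_neg. unfold Rminus, Rdiv; ring.
    - intros x Hx. apply is_derive_Reals. auto_derive; auto. rewrite Ropp_0, Rplus_0_r, Rminus_0_r. field. lra.
    - intros x Hx. cont.
    - intros x Hx. rewrite Hexp, Rmult_1_l. symmetry. apply Hcore'. unfold Rabs; destruct Rcase_abs; lra. }
  assert (IRv : IR = C*(h/2) + 2*E/k*s).
  { rewrite (RI (fun y => exp (- K * k ^ 2 * 0) * phi y) (fun y => C + D*sin(k*(y-h/2)) + E*cos(k*(y-h/2)))
             (fun y => C*y - D/k*cos(k*(y-h/2)) + E/k*sin(k*(y-h/2))) (h/4) (3*h/4) IR); [|lra|exact HIR| | |].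
    - cbv beta. rewrite e3, e2, sin_neg, cos_neg. fold s c. field. lra.
    - intros x Hx. apply is_derive_Reals. auto_derive; auto. tor. unfold Rminus. field. lra.
    - intros x Hx. cont.
    - intros x Hx. rewrite Hexp, Rmult_1_l. symmetry. apply Hright. lra. }
  destruct (HR (h/2) ltac:(lra)) as [Tt [Txx [HTt [HTxx HTeq]]]].
  cbv beta in HTt, HTxx.
  assert (Hphi : phi (h/2) = C + E).
  { rewrite Hright by lra. replace (k*(h/2-h/2)) with 0 by ring. rewrite sin_0, cos_0. ring. }
  assert (Tt0 : Tt = -K*k^2*(C+E)).
  { apply (uniqueness_limite (fun s0 => exp (- K * k ^ 2 * s0) * phi (h/2)) 0); auto.
    rewrite <- Hphi. apply is_derive_Reals. auto_derive; auto. tor. rewrite Rmult_0_r, exp_0. ring. }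
  rewrite Hexp in HTxx. destruct HTxx as [f' [[dl [Hdl Hf']] Hf'd]].
  assert (Hm : 0 < Rmin dl (h/4)) by (apply Rmin_pos; lra).
  assert (Hm1 := Rmin_l dl (h/4)). assert (Hm2 := Rmin_r dl (h/4)).
  assert (Txx0 : Txx = -E*k^2).
  { apply (uniqueness_limite (fun y => D*k*cos(k*(y-h/2)) - E*k*sin(k*(y-h/2))) (h/2)).
    - apply (derivable_pt_lim_locally_ext f' _ (h/2) (h/2 - Rmin dl (h/4)) (h/2 + Rmin dl (h/4))); [lra| |auto].
      intros z Hz. apply (der_eq (fun y => 1 * phi y) (fun y => C + D*sin(k*(y-h/2)) + E*cos(k*(y-h/2))) z (h/4) (3*h/4)); [lra| | | apply daction].
      + intros w Hw. rewrite Rmult_1_l. apply Hright. lra.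
      + apply Hf'. unfold Rabs; destruct Rcase_abs; lra.
    - apply is_derive_Reals. auto_derive; auto. replace (h/2 + - (h/2)) with 0 by ring.
      rewrite Rmult_0_r, sin_0, cos_0. ring. }
  rewrite Ic0, Tt0, Txx0 in HTeq. rewrite Rmult_0_r, Rmult_0_l in HTeq.
  assert (X : K*mu/h^2*(0 - 2/h*IR) = -(2*K*mu*IR)/h^3) by (field; lra).
  rewrite X in HTeq.
  assert (Q5 : k^2*C*h^3 = 2*mu*IR).
  { assert (Y : K*(k^2*C*h^3 - 2*mu*IR) = 0).
    { assert (W : K*k^2*C = 2*K*mu*IR/h^3) by lra.
      replace (K*(k^2*C*h^3 - 2*mu*IR)) with ((K*k^2*C)*h^3 - 2*K*mu*IR) by ring.
      rewrite W. field. lra. }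
    apply Rmult_integral in Y. destruct Y; lra. }
  rewrite IRv in Q5.
  assert (Ha : 0 < a) by (unfold a; apply Rmult_lt_0_compat; [apply Rmult_lt_0_compat|]; lra).
  assert (Q5' : C*(k^2*h^2/mu - 1)*a = E*s).
  { unfold a. replace (C*(k^2*h^2/mu - 1)*(k*h/4)) with (k*(k^2*C*h^3)/(4*mu) - k*h*C/4) by (field; lra).
    rewrite Q5. field. lra. }
  set (M := k^2*h^2/mu) in *.
  assert (SC : s*s + c*c = 1) by (unfold s, c; pose proof (sin2_cos2 a) as HH; unfold Rsqr in HH; lra).
  replace (k*h/2) with (2*a) by (unfold a; field).
  rewrite sin_2a, cos_2a. fold s c.
  replace (2/(k*h)) with (/(2*a)) by (unfold a; field; lra).
  destruct (Req_dec (s*c) 0) as [H0|H0].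
  { replace (2*s*c) with (2*(s*c)) by ring. rewrite H0. ring. }
  assert (u : (A+B)*c = 2*D*c) by lra.
  assert (v : (A+B)*s = -2*D*s) by lra.
  assert (w : 4*D*(s*c) = 0).
  { replace (4*D*(s*c)) with ((2*D*c)*s - (-2*D*s)*c) by ring. rewrite <- u, <- v. ring. }
  assert (D0 : D = 0).
  { destruct (Rmult_integral _ _ w) as [w1|w1]; [lra|contradiction]. }
  subst D.
  assert (AB : A + B = 0).
  { replace (A+B) with ((A+B)*(s*s+c*c)) by (rewrite SC; ring).
    replace ((A+B)*(s*s+c*c)) with (((A+B)*s)*s + ((A+B)*c)*c) by ring. rewrite u, v. ring. }
  assert (P1 : (A-B)*c = 2*E*s) by lra.
  assert (P2 : (A-B)*s = 2*C + 2*E*c) by lra.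
  assert (Cc : C*c = -E*(c*c - s*s)).
  { apply Rmult_eq_reg_l with 2; [|lra].
    replace (2*(C*c)) with ((A-B)*s*c - 2*E*c*c) by (rewrite P2; ring).
    replace ((A-B)*s*c) with (((A-B)*c)*s) by ring. rewrite P1. ring. }
  assert (ZZ : E*(s*c + (M-1)*a*(c*c - s*s)) = 0).
  { replace (E*(s*c + (M-1)*a*(c*c - s*s))) with ((E*s)*c + (M-1)*a*(E*(c*c-s*s))) by ring.
    rewrite <- Q5'. replace (E*(c*c-s*s)) with (-(C*c)) by lra. ring. }
  destruct (Req_dec E 0) as [E0|E0].
  2: { destruct (Rmult_integral _ _ ZZ) as [z|z]; [contradiction|].
       replace (2*s*c*(/(2*a)*(2*s*c) + (M-1)*(c*c-s*s))) with (2*s*c/a * (s*c + (M-1)*a*(c*c-s*s))) by (field; lra).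
       rewrite z. ring. }
  exfalso. subst E.
  assert (c0 : c <> 0) by (intro cc; apply H0; rewrite cc; ring).
  assert (AmB : A - B = 0).
  { apply Rmult_eq_reg_r with c; auto. rewrite P1. ring. }
  assert (A0 : A = 0) by lra. assert (B0 : B = 0) by lra.
  assert (C0 : C = 0) by (rewrite AmB in P2; lra).
  subst A B C.
  assert (Zero : forall x, -h <= x <= h -> phi x = 0).
  { intros x Hx.
    destruct (Rlt_dec (Rabs x) (h/4)) as [l1|l1]; [rewrite Hcore; auto; ring|].
    destruct (Rle_dec 0 x) as [l2|l2].
    - rewrite Rabs_right in l1 by lra.
      destruct (Rle_dec x (3*h/4)) as [l3|l3]; [rewrite Hright by lra; ring|rewrite Hbr by lra; ring].
    - rewrite Rabs_left in l1 by lra.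
      destruct (Rle_dec (-x) (3*h/4)) as [l3|l3]; [rewrite Hleft by lra; ring|rewrite Hbl by lra; ring]. }
  assert (Per : forall n : Z, forall x, phi (x + 2*h*IZR n) = phi x).
  { intro n. induction n using Z.peano_ind; intro x.
    - replace (x + 2*h*IZR 0) with x by (simpl; ring). reflexivity.
    - rewrite succ_IZR. replace (x + 2*h*(IZR n + 1)) with ((x + 2*h*IZR n) + 2*h) by ring.
      rewrite Hper. apply IHn.
    - rewrite <- Z.sub_1_r, minus_IZR. rewrite <- Hper.
      replace (x + 2*h*(IZR n - IZR 1) + 2*h) with (x + 2*h*IZR n) by (simpl; ring). apply IHn. }
  destruct (archimed ((x0 + h)/(2*h))) as [ar1 ar2].
  set (r := (x0 + h)/(2*h)) in *.
  assert (Hr2 : r * (2*h) = x0 + h) by (unfold r; field; lra).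
  apply Hx0.
  replace x0 with ((x0 - 2*h*IZR (up r - 1)) + 2*h*IZR (up r - 1)) by ring.
  rewrite Per. apply Zero. rewrite minus_IZR. simpl (IZR 1). nra.
Qed.
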